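(* In the oligopoly game below, there exists an equilibrium $(\mathbf A^{\rm d},\mathbf q^{\rm d})$ with $$\mathbf A^{\rm d}\mathbf q^{\rm d}=\boldsymbol\beta,\qquad \mathbf q^{\rm d}=\frac{\boldsymbol\gamma}{2+\alpha}$$ if and only if $r(\boldsymbol\gamma)\le 2+\alpha\le R(\boldsymbol\gamma)$.
   Context: Model: integers $n\ge2$, $m\ge2$; $\alpha>0$, $\boldsymbol\beta\in\mathbb R^m$ with $\|\boldsymbol\beta\|_2=1$, $\boldsymbol\gamma\in\mathbb R^n$ with all $\gamma_i>0$. $\mathcal A$ is the set of real $m\times n$ matrices $\mathbf A=[\mathbf a_1,\dots,\mathbf a_n]$ with all $\|\mathbf a_i\|_2=1$. Firm $i$ chooses a unit vector $\mathbf a_i\in\mathbb R^m$ and $q_i\ge0$, earning $\Pi_i=\alpha q_i\mathbf a_i^\top(\boldsymbol\beta-\sum_{j\ne i}q_j\mathbf a_j)-(1+\alpha)q_i^2+\gamma_iq_i$. An equilibrium is $(\mathbf A^*,\mathbf q^* )$ in which each $(\mathbf a_i^*,q_i^* )$ maximizes $\Pi_i$ given the others' choices. $R(\mathbf v)=\|\mathbf v\|_1$, $r(\mathbf v)=2\|\mathbf v\|_\infty-\|\mathbf v\|_1$. *)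

(* Defs.v *)
From HB Require Import structures.
From mathcomp Require Import all_boot all_order all_algebra.
From mathcomp Require Import reals.
Set Implicit Arguments. Unset Strict Implicit. Unset Printing Implicit Defensive.
Import Order.TTheory GRing.Theory Num.Theory.
Local Open Scope ring_scope.

Section Oligopoly.
Variable R : realType.

Definition sqnorm (k : nat) (v : 'cV[R]_k) : R := \sum_(l < k) (v l 0) ^+ 2.
Definition unit_vec (k : nat) (v : 'cV[R]_k) : Prop := sqnorm v = 1.

Definition norm1 (k : nat) (v : 'cV[R]_k) : R := \sum_(l < k) `|v l 0|.
Definition normoo (k : nat) (v : 'cV[R]_k) : R := \big[Num.max/0]_(l < k) `|v l 0|.
Definition Rbig (k : nat) (v : 'cV[R]_k) : R := norm1 v.
Definition rsmall (k : nat) (v : 'cV[R]_k) : R := 2 * normoo v - norm1 v.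

Definition profit (m n : nat) (alpha : R) (beta : 'cV[R]_m) (gamma : 'cV[R]_n)
  (A : 'M[R]_(m, n)) (q : 'cV[R]_n) (i : 'I_n) (a : 'cV[R]_m) (qi : R) : R :=
  alpha * qi * (a^T *m (beta - \sum_(j < n | j != i) q j 0 *: col j A)) 0 0
  - (1 + alpha) * qi ^+ 2 + gamma i 0 * qi.

Definition equilibrium (m n : nat) (alpha : R) (beta : 'cV[R]_m) (gamma : 'cV[R]_n)
  (A : 'M[R]_(m, n)) (q : 'cV[R]_n) : Prop :=
  (forall i : 'I_n, unit_vec (col i A)) /\
  (forall i : 'I_n, 0 <= q i 0) /\
  (forall (i : 'I_n) (a : 'cV[R]_m) (qi : R), unit_vec a -> 0 <= qi ->
      profit alpha beta gamma A q i a qi <= profit alpha beta gamma A q i (col i A) (q i 0)).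

End Oligopoly.

(* Main.v *)
Require Import Defs.
From HB Require Import structures.
From mathcomp Require Import all_boot all_order all_algebra.
From mathcomp Require Import reals ring lra.
Import Order.TTheory GRing.Theory Num.Theory.
Local Open Scope ring_scope.
Set Implicit Arguments. Unset Strict Implicit.
Section T. Variable R : realType.
Lemma rot (tx ty L W L' : R) : tx^+2 + ty^+2 = L^+2 -> 0 <= L -> 0 <= W -> 0 <= L' ->
  L - W <= L' -> W - L <= L' -> L' <= L + W ->
 exists ux uy, ux^+2 + uy^+2 = 1 /\ (tx - W*ux)^+2 + (ty - W*uy)^+2 = L'^+2.
Proof.
move=> hT hL hW hL' h1 h2 h3.
have [W0|Wn0] := eqVneq W 0.
  exists 1, 0; split; first ring.
  have -> : L' = L by lra.
  by rewrite W0 !mul0r !subr0.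
have [L0|Ln0] := eqVneq L 0.
  have tx0 : tx = 0 by nra.
  have ty0 : ty = 0 by nra.
  have -> : L' = W by lra.
  exists 1, 0; split; first ring.
  rewrite tx0 ty0; ring.
have Wp : 0 < W by rewrite lt_def Wn0.
have Lp : 0 < L by rewrite lt_def Ln0.
pose k := (L^+2 + W^+2 - L'^+2) / (2*W).
have ek : k * (2 * W) = L^+2 + W^+2 - L'^+2 by rewrite /k; field; lra.
have hk1 : k <= L by nra.
have hk2 : - L <= k by nra.
have hk : 0 <= L^+2 - k^+2 by nra.
pose r := Num.sqrt (L^+2 - k^+2).
have hr : r^+2 = L^+2 - k^+2 by rewrite /r sqr_sqrtr.
exists ((k*tx - r*ty)/L^+2), ((k*ty + r*tx)/L^+2).
split.
  have e : ((k*tx - r*ty)/L^+2)^+2 + ((k*ty + r*tx)/L^+2)^+2 =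
     (k^+2 + r^+2) * (tx^+2+ty^+2) / (L^+2)^+2 by field.
  by rewrite e hr hT; field.
have e : (tx - W * ((k*tx - r*ty)/L^+2))^+2 + (ty - W*((k*ty + r*tx)/L^+2))^+2 =
  (tx^+2+ty^+2) - 2*W*(k*(tx^+2+ty^+2)/L^+2) + W^+2 * ((k^+2+r^+2)*(tx^+2+ty^+2)/(L^+2)^+2) by field.
rewrite e hr hT.
have -> : L ^+ 2 - 2 * W * (k * L ^+ 2 / L ^+ 2) + W ^+ 2 * ((k ^+ 2 + (L ^+ 2 - k ^+ 2)) * L ^+ 2 / (L ^+ 2) ^+ 2)
   = L^+2 - k * (2 * W) + W^+2 by field.
rewrite ek; ring.
Qed.
Lemma term_le_sum n (w : nat -> R) i : (forall j, (j < n)%N -> 0 <= w j) -> (i < n)%N ->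
  w i <= \sum_(j < n) w j.
Proof.
move=> hw hi.
rewrite (bigD1 (Ordinal hi)) //= lerDl sumr_ge0 // => j _; exact: hw.
Qed.

Lemma plane n : forall (w : nat -> R) (L tx ty : R),
 (forall i, (i < n)%N -> 0 <= w i) -> tx^+2 + ty^+2 = L^+2 -> 0 <= L ->
 L <= \sum_(i < n) w i -> (forall i, (i < n)%N -> 2 * w i <= L + \sum_(j<n) w j) ->
 exists x y : nat -> R, (forall i, (i<n)%N -> x i ^+2 + y i ^+2 = 1) /\
   \sum_(i<n) w i * x i = tx /\ \sum_(i<n) w i * y i = ty.
Proof.
elim: n => [|n IH] w L tx ty hw hT hL hS hi.
  rewrite big_ord0 in hS.
  have L0 : L = 0 by lra.
  rewrite L0 in hT.
  have tx0 : tx = 0 by nra.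
  have ty0 : ty = 0 by nra.
  by exists (fun _ => 0), (fun _ => 0); rewrite !big_ord0 tx0 ty0.
rewrite big_ord_recr /= in hS hi.
set S' := \sum_(i < n) w i in hS hi.
have hw' : forall i, (i < n)%N -> 0 <= w i by move=> i hin; apply: hw; exact: ltnW.
have hWn : 0 <= w n by exact: hw.
have hS0 : 0 <= S' by apply: sumr_ge0 => j _; exact: hw'.
have [L' [hL'0 [h1 [h2 [h3 [h4 h5]]]]]] : exists L', 0 <= L' /\ L - w n <= L' /\ w n - L <= L' /\
   L' <= L + w n /\ L' <= S' /\ forall i, (i < n)%N -> 2 * w i <= L' + S'.
  have hn := hi n (ltnSn n).
  have [hle|hlt] := lerP S' (L + w n).
    exists S'; do 5! (split; first lra).
    move=> i hin; have := @term_le_sum n w i hw' hin; rewrite -/S'; lra.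
  exists (L + w n); do 5! (split; first lra).
  move=> i hin; have := hi i (ltnW hin); lra.
have [ux [uy [hu hT']]] := @rot tx ty L (w n) L' hT hL hWn hL'0 h1 h2 h3.
have [x [y [hxy [hx hy]]]] := IH w L' _ _ hw' hT' hL'0 h4 h5.
exists (fun i => if i == n then ux else x i), (fun i => if i == n then uy else y i).
split.
  move=> i; rewrite ltnS leq_eqVlt; case: eqP => [//|_] /= hin; exact: hxy.
rewrite !big_ord_recr /= !eqxx.
have e1 : \sum_(i < n) w i * (if (i : nat) == n then ux else x i) = \sum_(i < n) w i * x i.
  by apply: eq_bigr => i _; rewrite ltn_eqF.
have e2 : \sum_(i < n) w i * (if (i : nat) == n then uy else y i) = \sum_(i < n) w i * y i.
  by apply: eq_bigr => i _; rewrite ltn_eqF.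
rewrite e1 e2 hx hy; split; ring.
Qed.
Definition dot (m : nat) (u v : 'cV[R]_m) : R := \sum_l u l 0 * v l 0.

Lemma dot_le m (u v : 'cV[R]_m) : unit_vec u -> unit_vec v -> dot u v <= 1 /\ - dot u v <= 1.
Proof.
rewrite /unit_vec /sqnorm /dot => hu hv.
have e1 : \sum_l (u l 0 - v l 0)^+2 = \sum_l u l 0 ^+2 + \sum_l v l 0 ^+2 - 2 * \sum_l u l 0 * v l 0.
  by rewrite mulr_sumr -big_split -sumrB /=; apply: eq_bigr => l _; ring.
have e2 : \sum_l (u l 0 + v l 0)^+2 = \sum_l u l 0 ^+2 + \sum_l v l 0 ^+2 + 2 * \sum_l u l 0 * v l 0.
  by rewrite mulr_sumr -!big_split /=; apply: eq_bigr => l _; ring.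
have p1 : 0 <= \sum_l (u l 0 - v l 0)^+2 by apply: sumr_ge0 => l _; exact: sqr_ge0.
have p2 : 0 <= \sum_l (u l 0 + v l 0)^+2 by apply: sumr_ge0 => l _; exact: sqr_ge0.
rewrite e1 hu hv in p1; rewrite e2 hu hv in p2; split; lra.
Qed.

Lemma mulmx_dot m n (A : 'M[R]_(m, n)) q v :
  dot (A *m q) v = \sum_j q j 0 * dot (col j A) v.
Proof.
rewrite /dot.
under eq_bigr do rewrite mxE mulr_suml.
rewrite exchange_big /=; apply: eq_bigr => j _.
rewrite mulr_sumr; apply: eq_bigr => l _; rewrite !mxE; ring.
Qed.

Lemma mulmx_cols m n (A : 'M[R]_(m, n)) (q : 'cV[R]_n) :
  A *m q = \sum_j q j 0 *: col j A.
Proof.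
apply/matrixP => l z; rewrite ord1 !mxE summxE; apply: eq_bigr => j _.
by rewrite !mxE mulrC.
Qed.

Lemma sum_sq_comb m (f g : 'I_m -> R) a c :
  \sum_l (a * f l + c * g l)^+2 =
  a^+2 * \sum_l f l ^+2 + 2 * a * c * \sum_l f l * g l + c^+2 * \sum_l g l ^+2.
Proof. by rewrite !mulr_sumr -!big_split /=; apply: eq_bigr => l _; ring. Qed.

Lemma dsum m (k : 'I_m) (F : 'I_m -> R) : \sum_l (l == k)%:R * F l = F k.
Proof.
rewrite (bigD1 k) //= eqxx mul1r big1 ?addr0 // => l /negbTE ->; exact: mul0r.
Qed.
End T.

Theorem proposition3 (R : realType) (m n : nat) (hn : (2 <= n)%N) (hm : (2 <= m)%N)
  (alpha : R) (beta : 'cV[R]_m) (gamma : 'cV[R]_n)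
  (halpha : 0 < alpha) (hbeta : unit_vec beta) (hgamma : forall i : 'I_n, 0 < gamma i 0) :
  (exists (A : 'M[R]_(m, n)) (q : 'cV[R]_n),
      equilibrium alpha beta gamma A q /\
      A *m q = beta /\ q = (2 + alpha)^-1 *: gamma)
  <-> (rsmall gamma <= 2 + alpha /\ 2 + alpha <= Rbig gamma).
Proof.
set c := 2 + alpha.
have cp : 0 < c by rewrite /c; lra.
have hn1 : norm1 gamma = \sum_j gamma j 0.
  by apply: eq_bigr => j _; rewrite ger0_norm // ltW.
have hbb : dot beta beta = 1 by rewrite -hbeta /sqnorm /dot; apply: eq_bigr => l _; rewrite expr2.
split.
  move=> [A [q [[hcol [hq0 _]] [hAq hq]]]].
  have hqj : forall j, q j 0 = gamma j 0 / c by move=> j; rewrite hq mxE mulrC.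
  have hSq : \sum_j q j 0 = (\sum_j gamma j 0) / c.
    by rewrite mulr_suml; apply: eq_bigr => j _; exact: hqj.
  have hS : c <= \sum_j gamma j 0.
    have : dot beta beta <= \sum_j q j 0.
      rewrite -{1}hAq mulmx_dot; apply: ler_sum => j _.
      have [h1 _] := dot_le (hcol j) hbeta.
      by rewrite -[X in _ <= X]mulr1; apply: ler_wpM2l.
    by rewrite hbb hSq ler_pdivlMr // mul1r.
  split; last by rewrite /Rbig hn1.
  have hk : forall k, 2 * gamma k 0 - \sum_j gamma j 0 <= c.
    move=> k.
    have : dot (A *m q) (col k A) <= 1 by rewrite hAq; have [h _] := dot_le hbeta (hcol k).
    rewrite mulmx_dot (bigD1 k) //=.
    have hkk : dot (col k A) (col k A) = 1.
      by rewrite -(hcol k) /sqnorm /dot; apply: eq_bigr => l _; rewrite expr2.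
    rewrite hkk mulr1.
    have hlow : - \sum_(j | j != k) q j 0 <= \sum_(j | j != k) q j 0 * dot (col j A) (col k A).
      rewrite -sumrN; apply: ler_sum => j _.
      have [_ h2] := dot_le (hcol j) (hcol k).
      have := hq0 j; nra.
    have hsplit : \sum_j q j 0 = q k 0 + \sum_(j | j != k) q j 0 by rewrite (bigD1 k).
    move=> hle.
    have : 2 * q k 0 - \sum_j q j 0 <= 1 by lra.
    rewrite hSq hqj.
    have -> : 2 * (gamma k 0 / c) - (\sum_j gamma j 0) / c = (2 * gamma k 0 - \sum_j gamma j 0) / c.
      by field; lra.
    by rewrite ler_pdivrMr // mul1r.
  rewrite /rsmall hn1.
  suff : normoo gamma <= (c + \sum_j gamma j 0) / 2 by lra.
  apply: bigmax_le => [|j _].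
    have := ltW (lt_le_trans cp hS); lra.
  rewrite ger0_norm; last exact: ltW.
  have := hk j; lra.
move=> [hr hR].
rewrite /Rbig hn1 in hR.
have hgi : forall i, 2 * gamma i 0 <= c + \sum_j gamma j 0.
  move=> i.
  have : `|gamma i 0| <= normoo gamma by rewrite /normoo; exact: le_bigmax.
  rewrite ger0_norm; last exact: ltW.
  rewrite /rsmall hn1 in hr; lra.
pose w : nat -> R := fun j => if (insub j : option 'I_n) is Some i then gamma i 0 else 0.
have hwv : forall i : 'I_n, w i = gamma i 0 by move=> i; rewrite /w valK.
have hwS : \sum_(i < n) w i = \sum_j gamma j 0 by apply: eq_bigr => i _; exact: hwv.
have [x [y [hxy [hx hy]]]] : exists x y : nat -> R, (forall i, (i<n)%N -> x i ^+2 + y i ^+2 = 1) /\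
   \sum_(i<n) w i * x i = c /\ \sum_(i<n) w i * y i = 0.
  apply: plane.
  - by move=> i hi; rewrite (hwv (Ordinal hi)); exact: ltW.
  - by rewrite expr0n /= addr0.
  - exact: ltW.
  - by rewrite hwS.
  - by move=> i hi; rewrite (hwv (Ordinal hi)) hwS; exact: hgi.
have hm0 : (0 < m)%N by exact: ltnW.
pose k0 : 'I_m := Ordinal hm0.
pose k1 : 'I_m := Ordinal hm.
have h01 : beta k0 0 ^+2 + beta k1 0 ^+2 <= 1.
  rewrite -hbeta /sqnorm (bigD1 k0) //= (bigD1 k1) //= addrA lerDl.
  by apply: sumr_ge0 => l _; exact: sqr_ge0.
have [k hk] : exists k : 'I_m, 2 * beta k 0 ^+2 <= 1.
  have [h|h] := lerP (2 * beta k0 0 ^+2) 1; first by exists k0.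
  by exists k1; lra.
set b := beta k 0.
set s := 1 - b^+2.
have sp : 0 < s.
  have hk' : 2 * b ^+ 2 <= 1 by exact: hk.
  rewrite /s; lra.
set sq := Num.sqrt s.
have sqp : 0 < sq by rewrite /sq sqrtr_gt0.
have sq2 : sq ^+2 = s by rewrite /sq sqr_sqrtr // ltW.
pose v : 'I_m -> R := fun l => (l == k)%:R - b * beta l 0.
have hbb' : \sum_l beta l 0 ^+2 = 1 by exact: hbeta.
have hbv : \sum_l beta l 0 * v l = 0.
  rewrite /v.
  have -> : \sum_l beta l 0 * ((l == k)%:R - b * beta l 0) =
      \sum_l (l == k)%:R * beta l 0 - b * \sum_l beta l 0 ^+2.
    by rewrite mulr_sumr -sumrB; apply: eq_bigr => l _; ring.
  by rewrite dsum hbb' -/b; ring.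
have hvv : \sum_l v l ^+2 = s.
  rewrite /v.
  have -> : \sum_l ((l == k)%:R - b * beta l 0) ^+2 =
      \sum_l (l == k)%:R * ((l == k)%:R - 2 * b * beta l 0) + b^+2 * \sum_l beta l 0 ^+2.
    by rewrite mulr_sumr -big_split; apply: eq_bigr => l _ /=; ring.
  rewrite dsum eqxx hbb' /s.
  have -> : beta k 0 = b by [].
  have -> : (true%:R : R) = 1 by [].
  ring.
pose A : 'M[R]_(m, n) := \matrix_(l, i) (x i * beta l 0 + (y i / sq) * v l).
pose q : 'cV[R]_n := c^-1 *: gamma.
have hqj : forall j, q j 0 = gamma j 0 / c by move=> j; rewrite /q mxE mulrC.
have hcol : forall i, unit_vec (col i A).
  move=> i; rewrite /unit_vec /sqnorm.
  under eq_bigr do rewrite !mxE.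
  rewrite sum_sq_comb hbb' hbv hvv -sq2.
  have := hxy i (ltn_ord i).
  move=> e; rewrite -[RHS]e; field; lra.
have hAq : A *m q = beta.
  apply/matrixP => l z; rewrite ord1 !mxE.
  have -> : \sum_j A l j * q j 0 =
     beta l 0 * (\sum_(i < n) w i * x i) / c + v l / sq * (\sum_(i < n) w i * y i) / c.
    rewrite !mulr_sumr !mulr_suml -big_split; apply: eq_bigr => j _ /=.
    by rewrite !mxE hwv; field; apply/andP; split; lra.
  by rewrite hx hy; field; lra.
exists A, q; split; last by [].
split; first exact: hcol.
split; first by move=> i; rewrite hqj; apply: divr_ge0; [exact: ltW | exact: ltW].
move=> i a qi ha hqi.
have hres : beta - \sum_(j < n | j != i) q j 0 *: col j A = q i 0 *: col i A.
  by rewrite -{1}hAq mulmx_cols (bigD1 i) //= addrK.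
have hdot : forall u : 'cV[R]_m, (u^T *m (q i 0 *: col i A)) 0 0 = q i 0 * dot u (col i A).
  move=> u; rewrite -scalemxAr mxE; congr (_ * _); rewrite mxE /dot.
  by apply: eq_bigr => l _; rewrite !mxE.
rewrite /profit hres !hdot.
have hii : dot (col i A) (col i A) = 1.
  by rewrite -(hcol i) /sqnorm /dot; apply: eq_bigr => l _; rewrite expr2.
rewrite hii.
have [hd _] := dot_le ha (hcol i).
have hg : gamma i 0 = c * q i 0 by rewrite hqj; field; lra.
rewrite hg /c.
have hq0 : 0 <= q i 0 by rewrite hqj; apply: divr_ge0; [exact: ltW | exact: ltW].
have haq : 0 <= alpha * qi * q i 0 by apply: mulr_ge0 => //; apply: mulr_ge0 => //; exact: ltW.
have h1 := ler_wpM2l haq hd.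
have h2 : 0 <= (1 + alpha) * (q i 0 - qi)^+2 by apply: mulr_ge0; [lra | exact: sqr_ge0].
nra.
Qed.
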